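(* Let $K\in\mathbb{R}^{n\times n}$ be symmetric positive semidefinite, labels $y\in\{0,1\}^n$, sample weights $v\in\mathbb{R}^n$, $\lambda\ge0$, and consider kernel binary logistic regression in variables $\alpha\in\mathbb{R}^n$, $b\in\mathbb{R}$: $$\min F(\alpha,b)=-\sum_{i=1}^n v_i\big(y_i\log\hat y_i+(1-y_i)\log(1-\hat y_i)\big)+\lambda\alpha^\top K\alpha,\qquad \hat y=\sigma(K\alpha+b\mathbf{1}_n),$$ with $\sigma(t)=1/(1+e^{-t})$ entrywise. Let $\mathcal{Q}$ be a partition of $\{1,\dots,n\}$ such that (1) $(\mathcal{Q},\mathcal{Q})$ is equitable on $K$; (2) for each $T\in\mathcal{Q}$, $\sum_{i=1}^n v_iK_{ij}y_i$ is the same for all $j\in T$; (3) $v_i$ is constant on each $T\in\mathcal{Q}$. Then for every $b$ and every $\hat\alpha$ constant on each color of $\mathcal{Q}$, $\frac{\partial F}{\partial\alpha_{j_1}}(\hat\alpha,b)=\frac{\partial F}{\partial\alpha_{j_2}}(\hat\alpha,b)$ for all $j_1,j_2$ in the same color; hence $\mathcal{Q}$ together with the singleton $\{b\}$ is a reduction coloring for this problem.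
   Context: A partition of a finite set is a set of nonempty pairwise disjoint subsets (''colors'') covering it. A pair $(\mathcal{P},\mathcal{Q})$ of partitions of the row and column indices of $A$ is equitable on $A$ if for every $S\in\mathcal{P}$, $T\in\mathcal{Q}$: $\sum_{j\in T}A_{ij}$ is the same for all $i\in S$ and $\sum_{i\in S}A_{ij}$ is the same for all $j\in T$. A reduction coloring of an unconstrained differentiable convex program $\min F(x)$ is a partition of the variables such that at every point constant on each color, the partial derivatives of $F$ with respect to variables in a common color coincide. *)

(* Defs.v *)
From HB Require Import structures.
From mathcomp Require Import all_boot all_order all_algebra.
From mathcomp Require Import all_classical all_reals all_analysis.
Set Implicit Arguments. Unset Strict Implicit. Unset Printing Implicit Defensive.
Import Order.TTheory GRing.Theory Num.Theory.
Local Open Scope ring_scope.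

Section Defs.
Variable R : realType.

Definition sigmoid (t : R) : R := 1 / (1 + expR (- t)).

Definition equitable (m n : nat) (P : {set {set 'I_m}}) (Q : {set {set 'I_n}})
    (A : 'M[R]_(m, n)) : Prop :=
  finset.partition P [set: 'I_m] /\ finset.partition Q [set: 'I_n] /\
  forall S T, S \in P -> T \in Q ->
    (forall i1 i2, i1 \in S -> i2 \in S ->
        \sum_(j in T) A i1 j = \sum_(j in T) A i2 j) /\
    (forall j1 j2, j1 \in T -> j2 \in T ->
        \sum_(i in S) A i j1 = \sum_(i in S) A i j2).

Definition shift_coord (I : finType) (x : I -> R) (i : I) (t : R) : I -> R :=
  fun k => x k + (if k == i then t else 0).

Definition has_partial (I : finType) (F : (I -> R) -> R) (x : I -> R) (i : I)
    (d : R) : Prop :=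
  is_derive (0 : R) (1 : R) (fun t => F (shift_coord x i t)) d.

Definition const_on_colors (I : finType) (P : {set {set I}}) (x : I -> R) : Prop :=
  forall S, S \in P -> forall i j, i \in S -> j \in S -> x i = x j.

Definition reduction_coloring (I : finType) (F : (I -> R) -> R)
    (P : {set {set I}}) : Prop :=
  finset.partition P [set: I] /\
  forall x, const_on_colors P x ->
    forall S, S \in P -> forall i j, i \in S -> j \in S ->
      exists d, has_partial F x i d /\ has_partial F x j d.

Definition klr_obj (n : nat) (K : 'M[R]_n) (y v : 'I_n -> R) (lam : R)
    (x : option 'I_n -> R) : R :=
  let alpha := fun j => x (Some j) in
  let b := x None in
  let yhat := fun i => sigmoid (\sum_j K i j * alpha j + b) in
  - (\sum_i v i * (y i * ln (yhat i) + (1 - y i) * ln (1 - yhat i)))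
  + lam * (\sum_i \sum_j alpha i * K i j * alpha j).

Definition lift_coloring (n : nat) (Q : {set {set 'I_n}}) :
    {set {set option 'I_n}} :=
  (imset (fun T : {set 'I_n} => imset (@Some 'I_n) (mem T)) (mem Q)) :|: finset.set1 (finset.set1 (@None 'I_n)).

End Defs.

(* Main.v *)
Require Import Defs.
From HB Require Import structures.
From mathcomp Require Import all_boot all_order all_algebra.
From mathcomp Require Import all_classical all_reals all_analysis.
From mathcomp Require Import ring lra.
Import Order.TTheory GRing.Theory Num.Theory.
Local Open Scope ring_scope.


Section S.
Variable R : realType.

Lemma LD (f g : R -> R) (a df dg : R) : is_derive a (1:R) f df -> is_derive a (1:R) g dg ->
  is_derive a (1:R) (fun t => f t + g t) (df + dg).
Proof. move=> hf hg. exact: is_deriveD. Qed.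

Lemma LN (f : R -> R) (a df : R) : is_derive a (1:R) f df ->
  is_derive a (1:R) (fun t => - f t) (- df).
Proof. move=> hf. exact: is_deriveN. Qed.

Lemma LZ (f : R -> R) (a k df : R) : is_derive a (1:R) f df ->
  is_derive a (1:R) (fun t => k * f t) (k * df).
Proof. move=> hf. exact: is_deriveZ. Qed.

Lemma LM (f g : R -> R) (a df dg : R) : is_derive a (1:R) f df -> is_derive a (1:R) g dg ->
  is_derive a (1:R) (fun t => f t * g t) (f a * dg + g a * df).
Proof. move=> hf hg. exact: is_deriveM. Qed.

Lemma LS (I : finType) (h : I -> R -> R) (a : R) (dh : I -> R) :
  (forall i, is_derive a (1:R) (h i) (dh i)) ->
  is_derive a (1:R) (fun t => \sum_i h i t) (\sum_i dh i).
Proof.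
move=> hd; rewrite -fct_sumE.
elim/big_ind2 : _ => //; first exact: is_derive_cst.
by move=> f1 d1 f2 d2 h1 h2; exact: is_deriveD.
Qed.

Lemma LC (a c : R) : is_derive a (1:R) (fun _ : R => c) 0.
Proof. exact: is_derive_cst. Qed.

Lemma LI (a : R) : is_derive a (1:R) (fun t : R => t) 1.
Proof. exact: is_derive_id. Qed.


Definition phi (u : R) : R := ln (sigmoid u).
Definition dphi (u : R) : R := 'D_(1:R) phi u.

Lemma sig_pos (u : R) : 0 < sigmoid u.
Proof. by rewrite /sigmoid div1r invr_gt0 addr_gt0 // expR_gt0. Qed.

Lemma phi_derivable (z : R) : derivable phi z 1.
Proof.
have h0 : is_derive z (1:R) (fun u : R => expR (- u)) (expR (- z) * -1).
  exact: (@is_derive1_comp R expR (fun u => - u) z).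
have h1 : is_derive z (1:R) (fun u => 1 + expR (- u)) (0 + expR(-z) * -1).
  exact: (@LD _ _ _ _ _ (LC z 1) h0).
have nz : 1 + expR (- z) != 0 by rewrite gt_eqF // addr_gt0 // expR_gt0.
have h2 := @is_deriveV R (fun u => 1 + expR (- u)) z _ _ nz h1.
have pz : 0 < (fun u : R => (1 + expR (- u))^-1) z by rewrite /= invr_gt0 addr_gt0 // expR_gt0.
have h3 := @is_derive1_comp R (@ln R) (fun u : R => (1 + expR (- u))^-1) z _ _ (is_derive1_ln pz) h2.
have -> : phi = (@ln R) \o (fun u : R => (1 + expR (- u))^-1).
  by apply/funext => u; rewrite /phi /sigmoid /= div1r.
by case: h3.
Qed.

Lemma phi_is_derive (z : R) : is_derive z (1:R) phi (dphi z).
Proof. have := derivableP (phi_derivable z). by []. Qed.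

Lemma phi_comp (g : R -> R) (dg : R) : is_derive 0 (1:R) g dg ->
  is_derive 0 (1:R) (fun t => phi (g t)) (dphi (g 0) * dg).
Proof. move=> hg; exact: (@is_derive1_comp R phi g 0 _ _ (phi_is_derive (g 0)) hg). Qed.

Lemma ln_one_minus (u : R) : ln (1 - sigmoid u) = phi u - u.
Proof.
have e : 1 - sigmoid u = expR (- u) * sigmoid u.
  rewrite /sigmoid; have nz : 1 + expR (- u) != 0 by rewrite gt_eqF // addr_gt0 // expR_gt0.
  by field.
rewrite e lnM ?posrE ?expR_gt0 ?sig_pos // expRK /phi; ring.
Qed.


Lemma deq (f : R -> R) (a d d' : R) : is_derive a (1:R) f d -> d = d' -> is_derive a (1:R) f d'.
Proof. by move=> h <-. Qed.

Lemma LZr (f : R -> R) (a k df : R) : is_derive a (1:R) f df ->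
  is_derive a (1:R) (fun t => f t * k) (df * k).
Proof.
move=> h; apply: (@deq (fun t => f t * k) a (k * df)); last exact: mulrC.
have -> : (fun t => f t * k) = (fun t => k * f t) by apply/funext => t; rewrite mulrC.
exact: LZ.
Qed.

Lemma LB (f g : R -> R) (a df dg : R) : is_derive a (1:R) f df -> is_derive a (1:R) g dg ->
  is_derive a (1:R) (fun t => f t - g t) (df - dg).
Proof. move=> hf hg. exact: is_deriveB. Qed.

Lemma ite_der (c : R) (b : bool) :
  is_derive 0 (1:R) (fun t : R => c + (if b then t else 0)) (if b then 1 else 0).
Proof.
case: b => /=.
  exact: (deq _ _ _ _ (@LD _ _ _ _ _ (LC 0 c) (LI 0)) (add0r 1)).
exact: (deq _ _ _ _ (LC 0 (c + 0)) (erefl 0)).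
Qed.

Lemma color_sum (I : finType) (P : {set {set I}}) (w F G : I -> R) :
  finset.partition P [set: I] -> const_on_colors P w ->
  (forall S, S \in P -> \sum_(k in S) F k = \sum_(k in S) G k) ->
  \sum_k w k * F k = \sum_k w k * G k.
Proof.
move=> hP hw hFG.
have e H : \sum_k w k * H k = \sum_(S in P) \sum_(k in S) w k * H k.
  rewrite -(set_partition_big _ hP); apply: eq_bigl => k; by rewrite finset.in_setT.
rewrite !e; apply: eq_bigr => S PS.
have [->|[k0 k0S]] := set_0Vmem S; first by rewrite !big_set0.
have e2 H : \sum_(k in S) w k * H k = w k0 * \sum_(k in S) H k.
  rewrite big_distrr; apply: eq_bigr => k kS; by rewrite (hw S PS k k0).
by rewrite !e2 hFG.
Qed.


Section Main.
Variables (n : nat) (K : 'M[R]_n) (y v : 'I_n -> R) (lam : R).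

Definition xs (x : option 'I_n -> R) o (k : 'I_n) (t : R) :=
  x (Some k) + (if Some k == o then t else 0).
Definition zt x o i t := \sum_k K i k * xs x o k t + (x None + (if None == o then t else 0)).
Definition ee (o p : option 'I_n) : R := if p == o then 1 else 0.
Definition dz o i := \sum_k K i k * ee o (Some k) + ee o None.
Definition zz (x : option 'I_n -> R) i := \sum_k K i k * x (Some k) + x None.

Definition Dgen x o :=
  - (\sum_i v i * (dphi (zz x i) * dz o i - (1 - y i) * dz o i))
  + lam * (\sum_i \sum_k (x (Some i) * K i k * ee o (Some k) + x (Some k) * (ee o (Some i) * K i k))).

Lemma obj_eq x o : (fun t => klr_obj K y v lam (shift_coord x o t)) =
  (fun t => - (\sum_i v i * (phi (zt x o i t) - (1 - y i) * zt x o i t))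
     + lam * (\sum_i \sum_k xs x o i t * K i k * xs x o k t)).
Proof.
apply/funext => t; rewrite /klr_obj /shift_coord /=.
congr (- _ + _); apply: eq_bigr => i _.
rewrite ln_one_minus /phi /zt /xs.
have alg : forall yy a c : R, yy * a + (1 - yy) * (a - c) = a - (1 - yy) * c.
  by move=> yy a c; ring.
by rewrite alg.
Qed.

Lemma zt_der x o i : is_derive 0 (1:R) (zt x o i) (dz o i).
Proof.
rewrite /zt /dz; apply: LD; last exact: ite_der.
apply: LS => k; apply: LZ; exact: ite_der.
Qed.

Lemma zt0 x o i : zt x o i 0 = zz x i.
Proof.
rewrite /zt /zz /xs if_same addr0; congr (_ + _).
by apply: eq_bigr => k _; rewrite if_same addr0.
Qed.

Lemma main_der x o : is_derive 0 (1:R) (fun t => klr_obj K y v lam (shift_coord x o t)) (Dgen x o).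
Proof.
rewrite obj_eq.
have h1 i : is_derive 0 (1:R) (fun t => v i * (phi (zt x o i t) - (1 - y i) * zt x o i t))
   (v i * (dphi (zt x o i 0) * dz o i - (1 - y i) * dz o i)).
  exact: (LZ _ _ _ _ (LB _ _ _ _ _ (phi_comp _ _ (zt_der x o i)) (LZ _ _ _ _ (zt_der x o i)))).
have h2 i k : is_derive 0 (1:R) (fun t => xs x o i t * K i k * xs x o k t)
   (xs x o i 0 * K i k * ee o (Some k) + xs x o k 0 * (ee o (Some i) * K i k)).
  exact: (LM _ _ _ _ _ (LZr _ _ _ _ (ite_der _ _)) (ite_der _ _)).
have h3 := LD _ _ _ _ _ (LN _ _ _ (LS _ _ _ _ h1)) (LZ _ _ lam _ (LS _ _ _ _ (fun i => LS _ _ _ _ (h2 i)))).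
cbv beta in h3.
apply: (deq _ _ _ _ h3).
rewrite /Dgen.
have e : forall kk, xs x o kk 0 = x (Some kk) by move=> kk; rewrite /xs if_same addr0.
have E1 : \sum_i v i * (dphi (zt x o i 0) * dz o i - (1 - y i) * dz o i)
        = \sum_i v i * (dphi (zz x i) * dz o i - (1 - y i) * dz o i).
  by apply: eq_bigr => i _; rewrite zt0.
have E2 : \sum_i \sum_k (xs x o i 0 * K i k * ee o (Some k) + xs x o k 0 * (ee o (Some i) * K i k))
   = \sum_i \sum_k (x (Some i) * K i k * ee o (Some k) + x (Some k) * (ee o (Some i) * K i k)).
  by apply: eq_bigr => i _; apply: eq_bigr => k _; rewrite !e.
by rewrite E1 E2.
Qed.



Lemma sum_delta (F : 'I_n -> R) j : \sum_k F k * ee (Some j) (Some k) = F j.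
Proof.
rewrite (bigD1 j) //= /ee eqxx mulr1 big1 ?addr0 // => k hk.
rewrite ifN ?mulr0 //; apply: contra hk => /eqP [->]; exact: eqxx.
Qed.

Definition Dc x j :=
  - (\sum_i (v i * (dphi (zz x i) - (1 - y i))) * K i j)
  + lam * (\sum_i x (Some i) * K i j + \sum_k x (Some k) * K j k).

Lemma Dsimp x j : Dgen x (Some j) = Dc x j.
Proof.
have d1 i : dz (Some j) i = K i j by rewrite /dz sum_delta /ee /= addr0.
have E1 : \sum_i v i * (dphi (zz x i) * dz (Some j) i - (1 - y i) * dz (Some j) i)
    = \sum_i (v i * (dphi (zz x i) - (1 - y i))) * K i j.
  by apply: eq_bigr => i _; rewrite d1; ring.
have E3 : \sum_i \sum_k x (Some i) * K i k * ee (Some j) (Some k) = \sum_i x (Some i) * K i j.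
  by apply: eq_bigr => i _; exact: (sum_delta (fun k => x (Some i) * K i k) j).
have E4 : \sum_i \sum_k x (Some k) * (ee (Some j) (Some i) * K i k) = \sum_k x (Some k) * K j k.
  rewrite exchange_big; apply: eq_bigr => k _.
  rewrite (eq_bigr (fun i => (x (Some k) * K i k) * ee (Some j) (Some i))).
    exact: (sum_delta (fun i => x (Some k) * K i k) j).
  by move=> i _; ring.
have E2 : \sum_i \sum_k (x (Some i) * K i k * ee (Some j) (Some k) + x (Some k) * (ee (Some j) (Some i) * K i k))
   = \sum_i x (Some i) * K i j + \sum_k x (Some k) * K j k.
  rewrite -E3 -E4 -big_split; apply: eq_bigr => i _; exact: big_split.
by rewrite /Dgen /Dc E1 E2.
Qed.

Variable Q : {set {set 'I_n}}.
Hypothesis hQ : finset.partition Q [set: 'I_n].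
Hypothesis heq : equitable Q Q K.
Hypothesis hvKy : forall T, T \in Q -> forall j1 j2, j1 \in T -> j2 \in T ->
        \sum_i v i * K i j1 * y i = \sum_i v i * K i j2 * y i.
Hypothesis hv : forall T, T \in Q -> forall i1 i2, i1 \in T -> i2 \in T -> v i1 = v i2.

Lemma row_const {w : 'I_n -> R} : const_on_colors Q w -> forall S, S \in Q ->
  forall i1 i2, i1 \in S -> i2 \in S -> \sum_k w k * K i1 k = \sum_k w k * K i2 k.
Proof.
move=> hw S hS i1 i2 h1 h2; apply: (@color_sum 'I_n Q w (fun k => K i1 k) (fun k => K i2 k) hQ hw) => S' hS'.
case: heq => _ [_ h]; exact: ((h S S' hS hS').1 i1 i2 h1 h2).
Qed.

Lemma col_const {w : 'I_n -> R} : const_on_colors Q w -> forall T, T \in Q ->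
  forall j1 j2, j1 \in T -> j2 \in T -> \sum_i w i * K i j1 = \sum_i w i * K i j2.
Proof.
move=> hw T hT j1 j2 h1 h2; apply: (@color_sum 'I_n Q w (fun i => K i j1) (fun i => K i j2) hQ hw) => S' hS'.
case: heq => _ [_ h]; exact: ((h S' T hS' hT).2 j1 j2 h1 h2).
Qed.

Lemma Dc_sym x : const_on_colors Q (fun k => x (Some k)) -> forall T, T \in Q ->
  forall j1 j2, j1 \in T -> j2 \in T -> Dc x j1 = Dc x j2.
Proof.
move=> hx T hT j1 j2 h1 h2.
have zzc : const_on_colors Q (zz x).
  move=> S hS i1 i2 k1 k2; rewrite /zz.
  have e i : \sum_k K i k * x (Some k) = \sum_k x (Some k) * K i k
    by apply: eq_bigr => k _; rewrite mulrC.
  by rewrite !e (row_const hx S hS i1 i2 k1 k2).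
have wc : const_on_colors Q (fun i => v i * dphi (zz x i)).
  by move=> S hS i1 i2 k1 k2; rewrite (hv S hS i1 i2 k1 k2) (zzc S hS i1 i2 k1 k2).
have sp j : \sum_i (v i * (dphi (zz x i) - (1 - y i))) * K i j =
   \sum_i (v i * dphi (zz x i)) * K i j - \sum_i v i * K i j + \sum_i v i * K i j * y i.
  rewrite -sumrB -big_split; apply: eq_bigr => i _ /=; ring.
have vc : const_on_colors Q v by move=> S hS i1 i2 k1 k2; exact: (hv S hS i1 i2 k1 k2).
rewrite /Dc !sp (col_const wc T hT j1 j2 h1 h2) (col_const vc T hT j1 j2 h1 h2).
rewrite (hvKy T hT j1 j2 h1 h2) (col_const hx T hT j1 j2 h1 h2).
by rewrite (row_const hx T hT j1 j2 h1 h2).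
Qed.

Lemma part1 x : const_on_colors Q (fun k => x (Some k)) -> forall T, T \in Q ->
  forall j1 j2, j1 \in T -> j2 \in T ->
  exists d, has_partial (klr_obj K y v lam) x (Some j1) d /\
            has_partial (klr_obj K y v lam) x (Some j2) d.
Proof.
move=> hx T hT j1 j2 h1 h2; exists (Dgen x (Some j1)); split.
  exact: main_der.
rewrite Dsimp (Dc_sym x hx T hT j1 j2 h1 h2) -Dsimp; exact: main_der.
Qed.

End Main.

Lemma disj_intro (T : finType) (A B : {set T}) :
  (forall x, x \in A -> x \in B -> False) -> [disjoint A & B].
Proof.
move=> h; rewrite -finset.setI_eq0; apply/eqP/finset.setP => o.
rewrite finset.inE finset.in_set0; apply/negbTE/negP => /andP [ha hb]; exact: h o ha hb.
Qed.

Lemma lift_partition n (Q : {set {set 'I_n}}) :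
  finset.partition Q [set: 'I_n] -> finset.partition (lift_coloring Q) [set: option 'I_n].
Proof.
move=> hQ; have cQ := cover_partition hQ.
have tQ : finset.trivIset Q by case/and3P: hQ.
have n0 := partition0 hQ.
apply/and3P; split.
- apply/eqP/finset.setP => o; rewrite finset.in_setT; apply/finset.bigcupP.
  case: o => [k|].
  + have kc : k \in finset.cover Q by rewrite cQ finset.in_setT.
    exists (imset (@Some 'I_n) (mem (finset.pblock Q k))).
      by apply/finset.setUP; left; apply: imset_f; exact: finset.pblock_mem.
    by apply: imset_f; rewrite finset.mem_pblock.
  + exists (finset.set1 (@None 'I_n)).
      by apply/finset.setUP; right; exact: finset.set11.
    exact: finset.set11.
- apply/finset.trivIsetP => A B hA hB nAB.
  case/finset.setUP: hA => [/imsetP [T1 hT1 eA] | /finset.set1P eA];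
  case/finset.setUP: hB => [/imsetP [T2 hT2 eB] | /finset.set1P eB]; subst A B.
  + have nT : T1 != T2 by apply: contraNneq nAB => ->.
    move/finset.trivIsetP: tQ => tQ'; have dT := tQ' T1 T2 hT1 hT2 nT.
    apply: disj_intro => o /imsetP [k1 hk1 ->] /imsetP [k2 hk2 [e]].
    by rewrite -e (disjointFr dT hk1) in hk2.
  + by apply: disj_intro => o /imsetP [k hk ->] /finset.set1P.
  + by apply: disj_intro => o /finset.set1P -> /imsetP [k _].
  + by rewrite eqxx in nAB.
- apply/negP => /finset.setUP [/imsetP [T hT e] | /finset.set1P e].
  + have [T0|[k hk]] := finset.set_0Vmem T; first by rewrite T0 n0 in hT.
    have : Some k \in (finset.set0 : {set option 'I_n}) by rewrite e; exact: imset_f.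
    by rewrite finset.in_set0.
  + have : None \in (finset.set0 : {set option 'I_n}) by rewrite e finset.set11.
    by rewrite finset.in_set0.
Qed.

End S.

Theorem theorem7 (R : realType) (n : nat) (K : 'M[R]_n) (y v : 'I_n -> R)
    (lam : R) (Q : {set {set 'I_n}})
    (hKsym : K^T = K)
    (hKpsd : forall z : 'cV[R]_n, 0 <= (z^T *m K *m z) 0 0)
    (hy : forall i, y i = 0 \/ y i = 1)
    (hlam : 0 <= lam)
    (hQ : finset.partition Q [set: 'I_n])
    (heq : equitable Q Q K)
    (hvKy : forall T, T \in Q -> forall j1 j2, j1 \in T -> j2 \in T ->
        \sum_i v i * K i j1 * y i = \sum_i v i * K i j2 * y i)
    (hv : forall T, T \in Q -> forall i1 i2, i1 \in T -> i2 \in T -> v i1 = v i2) :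
  (forall (alpha : 'I_n -> R) (b : R),
     const_on_colors Q alpha ->
     forall T, T \in Q -> forall j1 j2, j1 \in T -> j2 \in T ->
       let x := fun o : option 'I_n => match o with Some j => alpha j | None => b end in
       exists d, has_partial (klr_obj K y v lam) x (Some j1) d /\
                 has_partial (klr_obj K y v lam) x (Some j2) d)
  /\ reduction_coloring (klr_obj K y v lam) (lift_coloring Q).
Proof.
split.
  move=> alpha b ha T hT j1 j2 h1 h2 x.
  exact: (@part1 R n K y v lam Q hQ heq hvKy hv x ha T hT j1 j2 h1 h2).
split; first exact: lift_partition.
move=> x hx S hS i j hi hj.
case/finset.setUP: hS => [/imsetP [T hT eS] | /finset.set1P eS]; subst S.
  case/imsetP: hi => j1 h1 ->; case/imsetP: hj => j2 h2 ->.
  apply: (@part1 R n K y v lam Q hQ heq hvKy hv x _ T hT j1 j2 h1 h2).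
  move=> T' hT' k1 k2 hk1 hk2.
  apply: (hx (imset (@Some 'I_n) (mem T'))); last by apply: imset_f.
    by apply/finset.setUP; left; apply: imset_f.
  by apply: imset_f.
move: hi hj => /finset.set1P -> /finset.set1P ->.
by eexists; split; exact: main_der.
Qed.
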